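(* Let $\tilde{\boldsymbol{\gamma}}\ge0$ be a downlink SINR vector such that $\mathbf{I}-\tilde{\mathbf{F}}(\tilde{\boldsymbol{\gamma}})$ and $\mathbf{I}-\tilde{\mathbf{H}}(\tilde{\boldsymbol{\gamma}})$ are invertible, and let $\tilde{\mathbf{p}}(\tilde{\boldsymbol{\gamma}})=(\mathbf{I}-\tilde{\mathbf{F}}(\tilde{\boldsymbol{\gamma}}))^{-1}\tilde{\mathbf{U}}(\tilde{\boldsymbol{\gamma}})$. Then $\tilde{\boldsymbol{\gamma}}$ is feasible, i.e. $\tilde p_i(\tilde{\boldsymbol{\gamma}})\ge0$ for all $i\in\mathcal{M}$ and $\sum_{i\in\mathcal{M}^{\mathcal{B}}_m}\tilde p_i(\tilde{\boldsymbol{\gamma}})\le\tilde P^{\max}_m$ for all $m\in\mathcal{B}$, if and only if $$0\le \tilde P_m(\tilde{\boldsymbol{\gamma}})\le \tilde P^{\max}_m\quad\text{for all } m\in\mathcal{B},$$ where $\tilde{\mathbf{P}}(\tilde{\boldsymbol{\gamma}})=(\mathbf{I}-\tilde{\mathbf{H}}(\tilde{\boldsymbol{\gamma}}))^{-1}\tilde{\mathbf{N}}^*$.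
   Context: Downlink cellular model: users $\mathcal{M}=\{1,\dots,M\}$, BSs $\mathcal{B}=\{1,\dots,B\}$; user $i$ served by BS $b_i$, $\mathcal{M}^{\mathcal{B}}_m=\{i:b_i=m\}$. Downlink gains $\tilde h_{i,m}>0$ (BS $m$ to user $i$), noises $\tilde N_i>0$, BS power budgets $\tilde P^{\max}_m>0$. $\tilde U_i=\tilde\gamma_i\tilde N_i/\tilde h_{i,b_i}$; $\tilde F_{ii}=0$, $\tilde F_{ij}=\tilde\gamma_i\tilde h_{i,b_j}/\tilde h_{i,b_i}$ ($i\ne j$), so $\tilde{\mathbf{p}}(\tilde{\boldsymbol{\gamma}})$ is the power vector achieving downlink SINRs $\tilde\gamma_i(\tilde{\mathbf p})=\frac{\tilde h_{i,b_i}\tilde p_i}{\sum_{j\ne i}\tilde h_{i,b_j}\tilde p_j+\tilde N_i}=\tilde\gamma_i$. With $\tilde\theta_i=\tilde\gamma_i/(\tilde\gamma_i+1)$: $\tilde H_{mm}=\sum_{i\in\mathcal{M}^{\mathcal{B}}_m}\tilde\theta_i$, $\tilde H_{mn}=\sum_{i\in\mathcal{M}^{\mathcal{B}}_m}\frac{\tilde h_{i,n}}{\tilde h_{i,m}}\tilde\theta_i$ for $m\ne n$, and $\tilde N^*_m=\sum_{i\in\mathcal{M}^{\mathcal{B}}_m}\tilde\theta_i\tilde N_i/\tilde h_{i,m}$. *)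

(* Defs.v *)
(* Users are 'I_M, base stations are 'I_B. *)
From HB Require Import structures.
From mathcomp Require Import all_boot all_order all_algebra.
Set Implicit Arguments. Unset Strict Implicit. Unset Printing Implicit Defensive.
Import Order.TTheory GRing.Theory Num.Theory.
Local Open Scope ring_scope.

Section Downlink.
Variables (R : realFieldType) (M B : nat).
Variable (b : 'I_M -> 'I_B).          (* serving BS of user i *)
Variable (h : 'I_M -> 'I_B -> R).     (* downlink gain from BS m to user i *)
Variable (N : 'I_M -> R).             (* noise powers *)
Variable (gamma : 'I_M -> R).

Definition theta (i : 'I_M) : R := gamma i / (gamma i + 1).

Definition Uvec : 'cV[R]_M := \col_i (gamma i * N i / h i (b i)).

Definition Fmat : 'M[R]_M :=
  \matrix_(i, j) (if i == j then 0 else gamma i * h i (b j) / h i (b i)).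

Definition Hmat : 'M[R]_B :=
  \matrix_(m, n) (if m == n then \sum_(i | b i == m) theta i
                  else \sum_(i | b i == m) h i n / h i m * theta i).

Definition Nstar : 'cV[R]_B := \col_m (\sum_(i | b i == m) theta i * N i / h i m).

Definition pvec : 'cV[R]_M := invmx (1%:M - Fmat) *m Uvec.

Definition Pvec : 'cV[R]_B := invmx (1%:M - Hmat) *m Nstar.

Definition feasible (Pmax : 'I_B -> R) : Prop :=
  (forall i, 0 <= pvec i 0) /\
  (forall m, \sum_(i | b i == m) pvec i 0 <= Pmax m).
End Downlink.

(* Main.v *)
Require Import Defs.
From HB Require Import structures.
From mathcomp Require Import all_boot all_order all_algebra.
From mathcomp Require Import ring lra.
Import Order.TTheory GRing.Theory Num.Theory.
Local Open Scope ring_scope.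

Theorem corollary2 (R : realFieldType) (M B : nat) (b : 'I_M -> 'I_B)
    (h : 'I_M -> 'I_B -> R) (N : 'I_M -> R) (Pmax : 'I_B -> R)
    (gamma : 'I_M -> R)
    (hpos : forall i m, 0 < h i m) (Npos : forall i, 0 < N i)
    (Pmaxpos : forall m, 0 < Pmax m)
    (gamma_ge0 : forall i, 0 <= gamma i)
    (F_inv : (1%:M - Fmat b h gamma) \in unitmx)
    (H_inv : (1%:M - Hmat b h gamma) \in unitmx) :
  feasible b h N gamma Pmax <->
  (forall m, 0 <= Pvec b h N gamma m 0 <= Pmax m).
Proof.
set p := pvec b h N gamma.
set Q : 'cV[R]_B := \col_m (\sum_(i | b i == m) p i 0).
have hp : p - Fmat b h gamma *m p = Uvec b h N gamma.
  by rewrite -{1}(mul1mx p) -mulmxBl /p /pvec mulmxA mulmxV // mul1mx.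
have pdef : pvec b h N gamma = p by [].
clearbody p.
have hne : forall i m, h i m != 0 by move=> i m; rewrite gt_eqF.
have gne : forall i, gamma i + 1 != 0.
  by move=> i; rewrite gt_eqF // ltr_wpDl.
set S := fun i => \sum_j h i (b j) * p j 0.
have SQ : forall i, S i = \sum_n h i n * Q n 0.
  move=> i; rewrite /S (partition_big b xpredT) //=.
  apply: eq_bigr => n _; rewrite mxE mulr_sumr.
  by apply: eq_bigr => j /eqP <-.
have key : forall i, p i 0 = theta gamma i * (S i + N i) / h i (b i).
  move=> i; have := hp; move/matrixP => /(_ i 0).
  rewrite !mxE (bigD1 i) //= [Fmat _ _ _ i i]mxE eqxx mul0r add0r.
  have -> : \sum_(j < M | j != i) Fmat b h gamma i j * p j 0 =
     gamma i / h i (b i) * \sum_(j < M | j != i) h i (b j) * p j 0.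
    rewrite mulr_sumr; apply: eq_bigr => j /negPf ji.
    by rewrite !mxE eq_sym ji; field; apply: hne.
  move=> E; rewrite /theta /S [\sum_j h i (b j) * p j 0](bigD1 i) //=.
  have hi := hne i (b i); have gi := gne i.
  move: E; set T := \sum_(j < M | j != i) _ => E.
  have Ep : p i 0 = (gamma i * T + gamma i * N i) / h i (b i).
    have : p i 0 = gamma i * N i / h i (b i) + gamma i / h i (b i) * T by rewrite -E; ring.
    by move=> ->; field.
  by rewrite Ep; field; rewrite hi gi.
have HQ : (1%:M - Hmat b h gamma) *m Q = Nstar b h N gamma.
  apply/matrixP => m k; rewrite (ord1 k) mulmxBl mul1mx !mxE.
  have -> : \sum_j Hmat b h gamma m j * Q j 0 =
      \sum_(i | b i == m) theta gamma i / h i m * S i.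
    transitivity (\sum_j \sum_(i | b i == m) theta gamma i / h i m * (h i j * Q j 0)).
      apply: eq_bigr => n _; rewrite [Hmat _ _ _ _ _]mxE.
      case: eqP => [<-|_]; rewrite mulr_suml; apply: eq_bigr => i /eqP bi.
        by field; apply: hne.
      by field; apply: hne.
    rewrite exchange_big; apply: eq_bigr => i _.
    by rewrite -mulr_sumr SQ.
  rewrite -sumrB; apply: eq_bigr => i /eqP bi.
  by rewrite key bi; field; apply: hne.
have PQ : Pvec b h N gamma = Q.
  by rewrite /Pvec -HQ mulmxA mulVmx // mul1mx.
have th0 : forall i, 0 <= theta gamma i.
  by move=> i; rewrite /theta divr_ge0 // addr_ge0.
rewrite PQ /feasible pdef; split.
  case=> p0 pm m; rewrite mxE pm andbT.
  by apply: sumr_ge0 => i _.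
move=> H; split; last first.
  by move=> m; have /andP[_] := H m; rewrite mxE.
move=> i; rewrite key; apply: divr_ge0; last exact: ltW.
apply: mulr_ge0 => //; apply: addr_ge0; last exact: ltW.
rewrite SQ; apply: sumr_ge0 => n _; apply: mulr_ge0; first exact: ltW.
by have /andP[] := H n.
Qed.
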